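(* Let $S$ be a uniform line VN with vertices $1,2,\dots,n$ (edges $\{i,i+1\}$, all demands $1$) and let $T$ be a tree PN on $n$ vertices with nonnegative edge costs. For an embedding $f$, consider the closed-form walk $f(1)\to f(2)\to\cdots\to f(n)$ in $T$ obtained by concatenating the unique tree paths between consecutive images. If there exists an embedding of $S$ on $T$ of minimum cost, then there exists a minimum-cost embedding $g$ of $S$ on $T$ such that in the walk $g(1)\to g(2)\to\cdots\to g(n)$ every edge of $T$ is traversed at most once in each direction.
   Context: Model. A physical network (PN) is an undirected connected graph $G=(V_G,E_G)$ with an edge cost function $t:E_G\to\mathbb{R}_{\ge 0}$. A virtual network (VN) is an undirected connected graph $S=(V_S,E_S)$ with $|V_S|=|V_G|=n$ and a demand function $w:E_S\to\mathbb{N}$. An embedding $f$ of $S$ on $G$ consists of a bijection $f_V:V_S\to V_G$ together with, for every edge $e=\{i,j\}\in E_S$, a single path $f_E(e)$ in $G$ between $f_V(i)$ and $f_V(j)$ (in a tree this path is unique). The cost of a path is the sum of the costs $t$ of its edges, and $\mathrm{Cost}(f)=\sum_{e\in E_S} w_e\cdot \mathrm{cost}(f_E(e))$. A uniform line is a path graph with all demands equal to $1$. *)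

(* Defs.v *)
From HB Require Import structures.
From mathcomp Require Import all_boot all_order all_algebra.
Set Implicit Arguments. Unset Strict Implicit. Unset Printing Implicit Defensive.
Import Order.TTheory GRing.Theory Num.Theory.
Local Open Scope ring_scope.

Definition simple_graph (V : finType) (e : rel V) : Prop :=
  symmetric e /\ irreflexive e.

Definition is_tree (V : finType) (e : rel V) : Prop :=
  [/\ simple_graph e,
      (forall x y : V, connect e x y) &
      (forall c : seq V, (3 <= size c)%N -> ~ ucycle e c)].

(* A (simple) path in the graph e from u to v, represented by the sequence p
   of vertices visited after u: u :: p is the vertex sequence. *)
Definition is_gpath (V : finType) (e : rel V) (u v : V) (p : seq V) : bool :=
  [&& path e u p, uniq (u :: p) & last u p == v].

Definition path_arcs (V : Type) (u : V) (p : seq V) : seq (V * V) :=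
  zip (u :: p) p.

Definition path_cost (R : numDomainType) (V : Type) (t : V -> V -> R)
    (u : V) (p : seq V) : R :=
  \sum_(a <- path_arcs u p) t a.1 a.2.

(* An embedding of the uniform line S on vertices 0, ..., n-1 (edges
   {i, i+1}) into the physical network (V, e): a bijection fV on vertices and,
   for every VN edge {i, i+1} (i.+1 < n), a path fE i in G from fV i to
   fV (i+1). *)
Record line_embedding (n : nat) (V : finType) := LineEmb {
  emb_V : 'I_n -> V;
  emb_E : nat -> seq V }.


Definition is_line_embedding (n : nat) (V : finType) (e : rel V)
    (f : line_embedding n V) : Prop :=
  bijective (emb_V f) /\
  forall (i j : 'I_n), val j = (val i).+1 ->
    is_gpath e (emb_V f i) (emb_V f j) (emb_E f i).

(* Cost of the embedding: sum over VN edges {i, i+1} (demand 1) of the cost of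
   the chosen path. *)
Definition line_cost (R : numDomainType) (n : nat) (V : finType)
    (t : V -> V -> R) (f : line_embedding n V) : R :=
  \sum_(i < n | ((val i).+1 < n)%N) path_cost t (emb_V f i) (emb_E f i).

Definition line_walk_arcs (n : nat) (V : finType) (f : line_embedding n V)
    : seq (V * V) :=
  flatten [seq path_arcs (emb_V f i) (emb_E f i)
          | i <- enum 'I_n & ((val i).+1 < n)%N].

Definition each_arc_at_most_once (n : nat) (V : finType)
    (f : line_embedding n V) : Prop :=
  forall u v : V, (count_mem (u, v) (line_walk_arcs f) <= 1)%N.

Definition min_cost_embedding (R : numDomainType) (n : nat) (V : finType)
    (e : rel V) (t : V -> V -> R) (f : line_embedding n V) : Prop :=
  is_line_embedding e f /\
  forall h : line_embedding n V, is_line_embedding e h ->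
    line_cost t f <= line_cost t h.

(* Main.v *)
Require Import Defs.
From mathcomp Require Import all_boot all_order all_algebra.
From mathcomp Require Import zify ring lra.
Set Implicit Arguments. Unset Strict Implicit. Unset Printing Implicit Defensive.
Import Order.TTheory GRing.Theory Num.Theory.
Local Open Scope ring_scope.

Definition Cw (R : numDomainType) (V : Type) (w : V * V -> R) (s : seq (V * V)) : R :=
  \sum_(a <- s) w a.

Lemma arcs_cons (V : Type) (x b : V) p : path_arcs x (b :: p) = (x, b) :: path_arcs b p.
Proof. by []. Qed.

Lemma arcs_cat (V : Type) (x : V) s1 s2 :
  path_arcs x (s1 ++ s2) = path_arcs x s1 ++ path_arcs (last x s1) s2.
Proof. by elim: s1 x => [|b s1 IH] x //=; rewrite !arcs_cons IH. Qed.

Lemma Cw_cat (R : numDomainType) (V : Type) (w : V * V -> R) s1 s2 :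
  Cw w (s1 ++ s2) = Cw w s1 + Cw w s2.
Proof. by rewrite /Cw big_cat. Qed.

Lemma Cw_cons (R : numDomainType) (V : Type) (w : V * V -> R) a s :
  Cw w (a :: s) = w a + Cw w s.
Proof. by rewrite /Cw big_cons. Qed.

Lemma Cw_nil (R : numDomainType) (V : Type) (w : V * V -> R) : Cw w [::] = 0.
Proof. by rewrite /Cw big_nil. Qed.

Lemma last_rev_belast (V : Type) (x : V) p : last (last x p) (rev (belast x p)) = x.
Proof.
elim: p x => [|b p IH] x //=.
by rewrite rev_cons last_rcons.
Qed.

Lemma Cw_rev (R : numDomainType) (V : Type) (w : V * V -> R) (x : V) p :
  (forall a b, w (a, b) = w (b, a)) ->
  Cw w (path_arcs (last x p) (rev (belast x p))) = Cw w (path_arcs x p).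
Proof.
move=> ws; elim: p x => [|b p IH] x //=.
rewrite rev_cons -cats1 arcs_cat last_rev_belast Cw_cat IH arcs_cons Cw_cons.
by rewrite /path_arcs /= Cw_cons Cw_nil addr0 addrC ws.
Qed.

Lemma arcs_edges (V : Type) (e : rel V) (x : V) p :
  path e x p -> all (fun a => e a.1 a.2) (path_arcs x p).
Proof. by elim: p x => [|b p IH] x //= /andP[-> /IH]. Qed.

Lemma Cw_subseq (R : numDomainType) (V : eqType) (w : V * V -> R) s1 s2 :
  subseq s1 s2 -> (forall a, a \in s2 -> 0 <= w a) -> Cw w s1 <= Cw w s2.
Proof.
elim: s2 s1 => [|b s2 IH] s1.
  by rewrite subseq0 => /eqP->.
move=> sub pos.
have pos2 : forall a, a \in s2 -> 0 <= w a.
  by move=> a ha; apply: pos; rewrite inE ha orbT.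
have wb : 0 <= w b by apply: pos; rewrite inE eqxx.
case: s1 sub => [|c s1] sub.
  by rewrite Cw_nil /Cw big_seq; apply: sumr_ge0 => a ha; apply: pos.
move: sub => /=; case: eqP => [->|_] sub.
  by rewrite !Cw_cons lerD2l; apply: IH.
rewrite [Cw w (b :: _)]Cw_cons; apply: (le_trans (IH _ sub pos2)).
by rewrite lerDr.
Qed.

Lemma loop_erase (V : eqType) (e : rel V) (x : V) p :
  path e x p -> exists p', [/\ path e x p', uniq (x :: p'), last x p' = last x p
                            & subseq (path_arcs x p') (path_arcs x p)].
Proof.
elim: p x => [|a q IH] x.
  by move=> _; exists [::].
move=> /= /andP[exa pq].
have [q' [pq' uq' lq' sq']] := IH a pq.
have sub1 : subseq ((x, a) :: path_arcs a q') ((x, a) :: path_arcs a q).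
  by rewrite /= eqxx.
case: (boolP (x \in a :: q')) => xin.
  have [r1 [r2 def]] : exists r1 r2, a :: q' = r1 ++ x :: r2.
    by case/splitPr: xin => r1 r2; exists r1, r2.
  have pall : path e x (a :: q') by rewrite /= exa pq'.
  move: pall; rewrite def cat_path => /andP[_ pall].
  exists r2; split.
  - by case/andP: pall.
  - have uq2 : uniq (a :: q') by []. by move: uq2; rewrite def cat_uniq => /and3P[_ _].
  - by rewrite /= -lq' -[last a q']/(last x (a :: q')) def last_cat.
  - apply: subseq_trans sub1.
    rewrite -arcs_cons def arcs_cat.
    apply: (subseq_trans _ (suffix_subseq _ _)).
    by rewrite arcs_cons subseq_cons.
exists (a :: q'); split => //.
- by rewrite /= exa pq'.
- by apply/andP.
Qed.

Lemma arc_split (V : eqType) (x : V) p a :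
  a \in path_arcs x p -> exists p1 p2, p = p1 ++ a.2 :: p2 /\ last x p1 = a.1.
Proof.
elim: p x => [|b p IH] x //.
rewrite arcs_cons inE => /orP[/eqP->|].
  by exists [::], p.
move=> /IH [p1 [p2 [-> <-]]].
by exists (b :: p1), p2.
Qed.

Lemma arcs_count (V : eqType) (x : V) p a :
  uniq (x :: p) -> (count_mem a (path_arcs x p) <= 1)%N.
Proof.
move=> u; rewrite count_uniq_mem ?leq_b1 //.
by apply: zip_uniql.
Qed.

Lemma gpath_rev (V : finType) (e : rel V) (x y : V) p :
  symmetric e -> is_gpath e x y p -> is_gpath e y x (rev (belast x p)).
Proof.
move=> se /and3P[pp up /eqP lp].
rewrite /is_gpath -lp rev_path last_rev_belast eqxx andbT.
apply/andP; split.
  by rewrite (@eq_path _ _ e) // => a b; rewrite se.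
by rewrite -rev_rcons -lastI rev_uniq.
Qed.


Lemma cost_walk (R : numDomainType) n (V : finType) (t : V -> V -> R) (f : line_embedding n V) :
  line_cost t f = Cw (fun a => t a.1 a.2) (line_walk_arcs f).
Proof.
rewrite /line_walk_arcs /Cw big_flatten big_map big_filter /line_cost.
rewrite big_enum_cond.
by apply: eq_bigl.
Qed.

Lemma filter_ord m : [seq i <- enum 'I_m.+1 | ((val i).+1 < m.+1)%N] = [seq inord k | k <- iota 0 m].
apply: (@inj_map _ _ val val_inj).
rewrite (@eq_filter _ _ (preim val (fun k => k.+1 < m.+1)%N)) // -filter_map val_enum_ord.
rewrite -map_comp.
have -> : [seq (val \o (inord : nat -> 'I_m.+1)) k | k <- iota 0 m] = iota 0 m.
  rewrite -[RHS]map_id; apply/eq_in_map => k; rewrite mem_iota /= => hk; rewrite inordK //; lia.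
rewrite -addn1 iotaD filter_cat /=.
rewrite add0n addn1 ltnn cats0.
rewrite (@eq_in_filter _ _ predT) ?filter_predT // => k; rewrite mem_iota /=; lia.
Qed.

Lemma walk_nat m (V : finType) (f : line_embedding m.+1 V) :
  line_walk_arcs f =
  flatten [seq path_arcs (emb_V f (inord k)) (emb_E f k) | k <- iota 0 m].
Proof.
rewrite /line_walk_arcs filter_ord -map_comp; congr flatten.
apply/eq_in_map => k; rewrite mem_iota /= => hk; rewrite inordK //; lia.
Qed.

Lemma Cw_flatten (R : numDomainType) (V : Type) (w : V * V -> R) (B : nat -> seq (V * V)) s :
  Cw w (flatten [seq B k | k <- s]) = \sum_(k <- s) Cw w (B k).
Proof. by rewrite /Cw big_flatten big_map. Qed.

Lemma two_idx (T : eqType) (A : nat -> seq T) a m :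
  (forall k, (k < m)%N -> (count_mem a (A k) <= 1)%N) ->
  (1 < count_mem a (flatten [seq A k | k <- iota 0 m]))%N ->
  exists i j, [/\ (i < j)%N, (j < m)%N, a \in A i & a \in A j].
Proof.
elim: m => [|m IH] hA //.
have -> : iota 0 m.+1 = iota 0 m ++ [:: m] by rewrite -addn1 iotaD.
rewrite map_cat flatten_cat count_cat /= cats0.
case: (ltnP 1 (count_mem a (flatten [seq A k | k <- iota 0 m]))) => h1 h2.
  have [i [j [ij jm ai aj]]] := IH (fun k hk => hA k (ltnW hk)) h1.
  by exists i, j; split => //; lia.
have hm := hA m (ltnSn m).
have c1 : (0 < count_mem a (flatten [seq A k | k <- iota 0 m]))%N by lia.
have c2 : (0 < count_mem a (A m))%N by lia.
rewrite -has_count in c1; rewrite -has_count in c2.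
case/hasP: c1 => b /flattenP [s /mapP [i hi ->] bin] /= /eqP ab.
exists i, m; split.
- by move: hi; rewrite mem_iota; lia.
- lia.
- by rewrite -ab.
- by case/hasP: c2 => c cin /= /eqP <-.
Qed.


Lemma split5 (R : numDomainType) (F : nat -> R) i j m :
  (i < j)%N -> (j < m)%N ->
  \sum_(0 <= k < m) F k =
  \sum_(0 <= k < i) F k + (F i + (\sum_(i.+1 <= k < j) F k + (F j + \sum_(j.+1 <= k < m) F k))).
Proof.
move=> ij jm.
rewrite (@big_cat_nat _ _ _ i 0 m) //=; last by lia.
rewrite (big_ltn (ltn_trans ij jm)) (@big_cat_nat _ _ _ j i.+1 m) //=; last by lia.
by rewrite (big_ltn jm).
Qed.

Definition sig (i j k : nat) : nat := if (i < k <= j)%N then (i + j.+1 - k)%N else k.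

Lemma sig_i i j : (i < j)%N -> sig i j i = i.
Proof. by rewrite /sig; case: ifP => //; lia. Qed.
Lemma sig_i1 i j : (i < j)%N -> sig i j i.+1 = j.
Proof. by rewrite /sig; case: ifP => //; lia. Qed.
Lemma sig_j i j : (i < j)%N -> sig i j j = i.+1.
Proof. by rewrite /sig; case: ifP => //; lia. Qed.
Lemma sig_j1 i j : (i < j)%N -> sig i j j.+1 = j.+1.
Proof. by rewrite /sig; case: ifP => //; lia. Qed.
Lemma sig_mid i j k : (i < k < j)%N -> sig i j k = (i + j - k).+1.
Proof. by rewrite /sig; case: ifP => //; lia. Qed.
Lemma sig_mid1 i j k : (i < k < j)%N -> sig i j k.+1 = (i + j - k)%N.
Proof. by rewrite /sig; case: ifP => //; lia. Qed.
Lemma sig_out i j k : (k <= i)%N || (j < k)%N -> sig i j k = k.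
Proof. by rewrite /sig; case: ifP => //; lia. Qed.
Lemma mid_lt i j k m : (i < k < j)%N -> (j < m)%N -> (i + j - k < m)%N.
Proof. lia. Qed.
Lemma out_mid i j k : k <> i -> k <> j -> (i < k < j)%N = false -> (k <= i)%N || (j < k)%N.
Proof. lia. Qed.
Lemma out_mid1 i j k : k <> i -> (k <= i)%N || (j < k)%N -> (k.+1 <= i)%N || (j < k.+1)%N.
Proof. lia. Qed.
Lemma sig_lt i j k m : (j < m)%N -> (k < m.+1)%N -> (sig i j k < m.+1)%N.
Proof. move=> jm km; rewrite /sig; case: ifP => [/andP[h1 h2]|h]; lia. Qed.
Lemma sigK i j k : sig i j (sig i j k) = k.
Proof.
rewrite {2}/sig; case: ifP => h1.
  rewrite /sig; case: ifP => h2; lia.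
by rewrite /sig h1.
Qed.

Lemma outL i j k : (k < i)%N -> (i < j)%N ->
  [/\ (k == i) = false, (k == j) = false, (i < k < j)%N = false & (k <= i)%N || (j < k)%N].
Proof. move=> h1 h2; split; try (apply/eqP; lia); try apply/negbTE; lia. Qed.
Lemma outR i j k : (j < k)%N -> (i < j)%N ->
  [/\ (k == i) = false, (k == j) = false, (i < k < j)%N = false & (k <= i)%N || (j < k)%N].
Proof. move=> h1 h2; split; try (apply/eqP; lia); try apply/negbTE; lia. Qed.
Lemma midR i j k : (i.+1 <= k < j)%N ->
  [/\ ((i.+1 + j - k.+1)%N == i) = false, ((i.+1 + j - k.+1)%N == j) = false,
      (i < i.+1 + j - k.+1 < j)%N & (i + j - (i.+1 + j - k.+1))%N = k].
Proof. move=> h1; split; try (apply/eqP; lia); lia. Qed.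
Lemma jneqi i j : (i < j)%N -> (j == i) = false.
Proof. move=> h; apply/eqP; lia. Qed.

Lemma improve (R : realFieldType) m (V : finType) (e : rel V)
    (f : line_embedding m.+1 V) u v :
  symmetric e -> is_line_embedding e f ->
  (1 < count_mem (u, v) (line_walk_arcs f))%N ->
  exists g : line_embedding m.+1 V, [/\ is_line_embedding e g, e u v &
   forall w : V * V -> R, (forall a b, w (a, b) = w (b, a)) ->
     (forall a, e a.1 a.2 -> 0 <= w a) ->
     Cw w (line_walk_arcs g) + (w (u, v) + w (u, v)) <= Cw w (line_walk_arcs f)].
Proof.
move=> se [bijf gpf] hc.
pose x := fun k : nat => emb_V f (inord k).
pose P := emb_E f.
have gp : forall k, (k < m)%N -> is_gpath e (x k) (x k.+1) (P k).
  move=> k km; have := gpf (inord k) (inord k.+1).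
  rewrite inordK; last lia.
  apply; rewrite /= !inordK //; lia.
move: hc; rewrite walk_nat => hc.
have [i [j [ij jm ai aj]]] := two_idx
   (A := fun k => path_arcs (x k) (P k))
   (fun k hk => arcs_count (u, v) (proj1 (andP (proj2 (andP (gp k hk)))))) hc.
have [pPi uPi /eqP lPi] := and3P (gp i (ltn_trans ij jm)).
have [pPj uPj /eqP lPj] := and3P (gp j jm).
have euv : e u v.
  by have /allP /(_ _ ai) := arcs_edges pPi.
have [p1 [p2 [dPi lp1]]] := arc_split ai.
have [q1 [q2 [dPj lq1]]] := arc_split aj.
have {dPi}dPi : P i = p1 ++ v :: p2 := dPi.
have {dPj}dPj : P j = q1 ++ v :: q2 := dPj.
have {lp1}lp1 : last (x i) p1 = u := lp1.
have {lq1}lq1 : last (x j) q1 = u := lq1.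
move: pPi pPj; rewrite dPi dPj !cat_path => /andP[pp1 pp2'] /andP[pq1 pq2'].
have pp2 : path e v p2 by move: pp2'; rewrite /= => /andP[].
have pq2 : path e v q2 by move: pq2'; rewrite /= => /andP[].
have esym : (fun a b => e b a) =2 e by move=> a b; rewrite se.
have pr1 : path e u (rev (belast (x j) q1)).
  by rewrite -lq1 rev_path (eq_path esym).
have pr2 : path e (last v p2) (rev (belast v p2)).
  by rewrite rev_path (eq_path esym).
have xi1 : x i.+1 = last v p2 by rewrite -lPi dPi last_cat.
have xj1 : x j.+1 = last v q2 by rewrite -lPj dPj last_cat.
pose W1 := p1 ++ rev (belast (x j) q1).
pose W2 := rev (belast v p2) ++ q2.
have pW1 : path e (x i) W1 by rewrite cat_path pp1 lp1 pr1.
have pW2 : path e (x i.+1) W2 by rewrite cat_path xi1 pr2 last_rev_belast pq2.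
have lW1 : last (x i) W1 = x j by rewrite last_cat lp1 -lq1 last_rev_belast.
have lW2 : last (x i.+1) W2 = x j.+1 by rewrite last_cat xi1 last_rev_belast xj1.
have [Q1 [pQ1 uQ1 lQ1 sQ1]] := loop_erase pW1.
have [Q2 [pQ2 uQ2 lQ2 sQ2]] := loop_erase pW2.
rewrite lW1 in lQ1; rewrite lW2 in lQ2.
pose Eg := fun k : nat => if k == i then Q1 else if k == j then Q2
  else if (i < k < j)%N then rev (belast (x (i + j - k)%N) (P (i + j - k)%N)) else P k.
have valid : forall k, (k < m)%N -> is_gpath e (x (sig i j k)) (x (sig i j k.+1)) (Eg k).
  move=> k km; rewrite /Eg.
  case: eqP => [->|ki].
    by rewrite sig_i // sig_i1 //; rewrite /is_gpath pQ1 uQ1 lQ1 eqxx.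
  case: eqP => [->|kj].
    by rewrite sig_j // sig_j1 //; rewrite /is_gpath pQ2 uQ2 lQ2 eqxx.
  case: ifP => hk.
    rewrite sig_mid // sig_mid1 //.
    apply: gpath_rev => //; apply: gp; exact: mid_lt hk jm.
  have hk' : (k <= i)%N || (j < k)%N by apply: out_mid.
  rewrite !sig_out //; first exact: gp.
  by apply: out_mid1.
have tauK : cancel (fun k : 'I_m.+1 => (inord (sig i j k) : 'I_m.+1))
                   (fun k : 'I_m.+1 => (inord (sig i j k) : 'I_m.+1)).
  move=> k; apply: val_inj => /=.
  by rewrite (inordK (@sig_lt i j k m jm (ltn_ord k))) sigK inordK.
exists (LineEmb (fun k : 'I_m.+1 => emb_V f (inord (sig i j k))) Eg).
split => //.
  split.
    case: bijf => finv h1 h2.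
    exists (fun y => (inord (sig i j (finv y)) : 'I_m.+1)) => /= k.
      by rewrite h1 tauK.
    by rewrite (tauK (finv k)) h2.
  move=> i0 j0 hij /=.
  have hj : nat_of_ord j0 = (nat_of_ord i0).+1 := hij.
  rewrite hj; apply: valid.
  by have := ltn_ord j0; rewrite hj.
move=> w ws wpos.
rewrite walk_nat /=.
have wposa : forall y p a, path e y p -> a \in path_arcs y p -> 0 <= w a.
  by move=> y p a pp ha; apply: wpos; have /allP := arcs_edges pp; apply.
set G := fun k => Cw w (path_arcs (x k) (P k)).
set H := fun k => Cw w (path_arcs (x (sig i j k)) (Eg k)).
have iota_idx : iota 0 m = index_iota 0 m by rewrite /index_iota subn0.
have -> : Cw w (flatten [seq path_arcs (emb_V f (inord k)) (emb_E f k) | k <- iota 0 m])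
   = \sum_(0 <= k < m) G k by rewrite Cw_flatten iota_idx.
have -> : Cw w (flatten [seq path_arcs (emb_V f (inord (sig i j (inord k : 'I_m.+1)))) (Eg k)
     | k <- iota 0 m]) = \sum_(0 <= k < m) H k.
  rewrite Cw_flatten iota_idx big_seq_cond [RHS]big_seq_cond; apply: eq_bigr => k.
  by rewrite mem_index_iota andbT => /andP[_ hk]; rewrite /H inordK // ltnW.
have hL : \sum_(0 <= k < i) H k = \sum_(0 <= k < i) G k.
  apply: eq_big_nat => k /andP[_ hk].
  have [h1 h2 h3 h4] := outL hk ij.
  by rewrite /H /Eg h1 h2 h3 sig_out.
have hR : \sum_(j.+1 <= k < m) H k = \sum_(j.+1 <= k < m) G k.
  apply: eq_big_nat => k /andP[hk _].
  have [h1 h2 h3 h4] := outR hk ij.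
  by rewrite /H /Eg h1 h2 h3 sig_out.
have hM : \sum_(i.+1 <= k < j) H k = \sum_(i.+1 <= k < j) G k.
  rewrite big_nat_rev; apply: eq_big_nat => k hk.
  have [h1 h2 h3 h4] := midR hk.
  rewrite /H /Eg h1 h2 h3 h4 sig_mid // h4.
  have kj : (k < m)%N by case/andP: hk => _ /ltn_trans; apply.
  have [_ _ /eqP lk] := and3P (gp k kj).
  by rewrite -lk Cw_rev.
have hHi : H i <= G i - (w (u, v) + Cw w (path_arcs v p2)) + Cw w (path_arcs (x j) q1).
  rewrite /H /Eg eqxx sig_i //.
  apply: (le_trans (Cw_subseq sQ1 (fun a ha => wposa _ _ a pW1 ha))).
  rewrite /W1 arcs_cat Cw_cat lp1 -{1}lq1 Cw_rev // /G dPi arcs_cat Cw_cat lp1.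
  by rewrite arcs_cons Cw_cons; lra.
have hHj : H j <= G j - (w (u, v) + Cw w (path_arcs (x j) q1)) + Cw w (path_arcs v p2).
  rewrite /H /Eg eqxx jneqi // sig_j //.
  apply: (le_trans (Cw_subseq sQ2 (fun a ha => wposa _ _ a pW2 ha))).
  rewrite /W2 arcs_cat Cw_cat xi1 Cw_rev // last_rev_belast /G dPj arcs_cat Cw_cat lq1.
  by rewrite arcs_cons Cw_cons; lra.
rewrite (split5 H ij jm) (split5 G ij jm) hL hM hR.
lra.
Qed.

Unset Implicit Arguments. Set Strict Implicit.

Lemma Cw_one (R : numDomainType) (V : Type) (s : seq (V * V)) :
  Cw (fun _ => (1 : R)) s = (size s)%:R.
Proof.
elim: s => [|a s IH]; first by rewrite Cw_nil.
by rewrite Cw_cons IH /= -add1n natrD.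
Qed.

Theorem lemma2 (R : realFieldType) (n : nat) (V : finType) (e : rel V)
    (t : V -> V -> R) :
  #|V| = n ->
  is_tree e ->
  (forall u v : V, t u v = t v u) ->
  (forall u v : V, e u v -> 0 <= t u v) ->
  (exists f : line_embedding n V, min_cost_embedding e t f) ->
  exists g : line_embedding n V,
    min_cost_embedding e t g /\ each_arc_at_most_once g.
Proof.
move=> _ [[se _] _ _] tsym tpos [f fmin].
case: n f fmin => [|m] f fmin.
  exists f; split => // u v.
  rewrite /line_walk_arcs; have -> : enum 'I_0 = [::] by apply: size0nil; rewrite size_enum_ord.
  by [].
suff main : forall N (g : line_embedding m.+1 V), min_cost_embedding e t g ->
    (size (line_walk_arcs g) < N)%N ->
    exists g' : line_embedding m.+1 V, min_cost_embedding e t g' /\ each_arc_at_most_once g'.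
  exact: (main _ f fmin (ltnSn _)).
elim=> [|N IH] g gmin hs //.
case: (pickP (fun a : V * V => 1 < count_mem a (line_walk_arcs g))%N) => [[u v] /= huv|none].
  have [g' [eg' euv hw]] := improve R se (proj1 gmin) huv.
  have ht := hw (fun a => t a.1 a.2) (fun a b => tsym a b) (fun a h => tpos _ _ h).
  have h1 := hw (fun _ => 1) (fun _ _ => erefl) (fun _ _ => ler01).
  apply: (IH g').
    split => // h eh.
    apply: le_trans (proj2 gmin h eh).
    rewrite !cost_walk; move: ht => /=.
    have := tpos _ _ euv; lra.
  have h2 : ((size (line_walk_arcs g') + 2)%N%:R : R) <= (size (line_walk_arcs g))%:R.
    by rewrite natrD; move: h1; rewrite !Cw_one; lra.
  move: h2; rewrite ler_nat => h1'.
  move: hs; rewrite ltnS => hs.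
  apply: leq_trans hs; apply: leq_trans h1'; rewrite addn2; exact: leqnSn.
exists g; split => // u v.
by have := none (u, v); rewrite /= ltnNge => /negbFE.
Qed.
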